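(* Let $f(t)\in\mathbb{F}_q[t;\theta]$ be a right divisor of some monic $F(t)\in\mathbb{F}_q[t;\theta]$ of degree $n$, let $\mathscr{C}=\{w\in\mathbb{F}_q[t;\theta]:\deg w<n,\ w=a(t)f(t)\text{ for some }a\in\mathbb{F}_q[t;\theta]\}\subseteq\mathbb{F}_q^n$ be the linear code generated by $f$, and let $\mathscr{C}^{[]_s}=\{v\in\mathbb{F}_q[x]:\deg v<[n]_s,\ v=b(x)f^{[]_s}(x)\text{ for some }b\in\mathbb{F}_q[x]\}\subseteq\mathbb{F}_q^{[n]_s}$ be the linear code generated by $f^{[]_s}(x)$. Then $d(\mathscr{C}^{[]_s})\le d(\mathscr{C})$, and equality holds if and only if some codeword of minimal weight of $\mathscr{C}^{[]_s}$ belongs to $\mathbb{F}_q[x^{[]_s}]$.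
   Context: $q=p^r$ with $p$ prime, $\theta(a)=a^{p^s}$ for $a\in\mathbb{F}_q$ with $1\le s\le r-1$, and $\mathbb{F}_q[t;\theta]$ is the skew polynomial ring with $ta=\theta(a)t$. Polynomials of degree $<n$ are identified with their coefficient vectors in $\mathbb{F}_q^n$; the weight of a polynomial is its number of nonzero coefficients, and $d(\cdot)$ is the minimum Hamming distance (minimum nonzero weight). For $i\ge0$, $[i]_s=\frac{(p^s)^i-1}{p^s-1}$. For $f(t)=\sum_ia_it^i$, $f^{[]_s}(x)=\sum_ia_ix^{[i]_s}\in\mathbb{F}_q[x]$ (commutative polynomial ring), and $\mathbb{F}_q[x^{[]_s}]=\{\sum_i\alpha_ix^{[i]_s}\}\subseteq\mathbb{F}_q[x]$. *)

(* Defs.v *)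
(* Skew polynomials F_q[t;theta] are represented by their
   coefficient polynomials in {poly F}, with the skew product skew_mul. *)
From HB Require Import structures.
From mathcomp Require Import all_boot all_order all_algebra all_field.
Set Implicit Arguments. Unset Strict Implicit. Unset Printing Implicit Defensive.
Import GRing.Theory.
Local Open Scope ring_scope.

Section Skew.
Variable F : finFieldType.
Variables (p s : nat).

Definition theta (a : F) : F := a ^+ (p ^ s)%N.

Definition skew_mul (f g : {poly F}) : {poly F} :=
  \sum_(i < size f) \sum_(j < size g)
     (f`_i * iter i theta g`_j) *: 'X^(i + j).

Definition qbr (i : nat) : nat := (((p ^ s) ^ i).-1 %/ (p ^ s).-1)%N.

Definition linearize (f : {poly F}) : {poly F} :=
  \sum_(i < size f) f`_i *: 'X^(qbr i).

Definition in_qbr_span (v : {poly F}) : Prop :=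
  forall k, v`_k != 0 -> exists i, k = qbr i.

Definition skew_code (n : nat) (f : {poly F}) : {poly F} -> Prop :=
  fun w => (size w <= n)%N /\ exists a, w = skew_mul a f.

Definition lin_code (n : nat) (f : {poly F}) : {poly F} -> Prop :=
  fun v => (size v <= qbr n)%N /\ exists b, v = b * linearize f.

End Skew.

Definition weight (F : finFieldType) (w : {poly F}) : nat :=
  count (fun c : F => c != 0) w.

Definition is_min_dist (F : finFieldType) (C : {poly F} -> Prop) (d : nat) : Prop :=
  (exists w, C w /\ w != 0 /\ weight w = d) /\
  (forall w, C w -> w != 0 -> (d <= weight w)%N).

(* Main.v *)
Require Import Defs.
From HB Require Import structures.
From mathcomp Require Import all_boot all_order all_algebra all_field.
From mathcomp Require Import zify ring.
Import GRing.Theory.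
Local Open Scope ring_scope.

Set Implicit Arguments. Unset Strict Implicit. Unset Printing Implicit Defensive.
Section Qbr.
Variables (p s : nat).
Hypothesis P2 : (1 < p ^ s)%N.
Local Notation P := (p ^ s)%N.

Lemma geomS i : (P.-1 * (\sum_(k < i) P ^ k) = (P ^ i).-1)%N.
Proof.
elim: i => [|i IH]; first by rewrite big_ord0 muln0 expn0.
rewrite big_ord_recr /= mulnDr IH expnS.
have h1 : (0 < P ^ i)%N by rewrite expn_gt0; timeout 10 lia.
set X := (P ^ i)%N in h1 *.
have : (P * X = X + P.-1 * X)%N by rewrite -{1}(prednK (ltnW P2)) mulSn.
timeout 10 lia.
Qed.

Lemma qbrE i : qbr p s i = (\sum_(k < i) P ^ k)%N.
Proof. by rewrite /qbr -geomS mulKn // -ltnS prednK; timeout 10 lia. Qed.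

Lemma qbr0 : qbr p s 0 = 0%N.
Proof. by rewrite qbrE big_ord0. Qed.

Lemma qbrD i j : qbr p s (i + j) = (qbr p s i + P ^ i * qbr p s j)%N.
Proof.
rewrite !qbrE big_split_ord /= big_distrr /=; congr (_ + _)%N.
by apply: eq_bigr => k _; rewrite expnD.
Qed.

Lemma qbrS i : qbr p s i.+1 = (qbr p s i + P ^ i)%N.
Proof. by rewrite qbrE big_ord_recr /= -qbrE. Qed.

Lemma qbr_lt i j : (i < j)%N -> (qbr p s i < qbr p s j)%N.
Proof.
apply: (@homo_ltn _ (qbr p s) (fun a b => a < b)%N); first by move=> y x z; apply: ltn_trans.
move=> k; rewrite qbrS; have : (0 < P ^ k)%N by rewrite expn_gt0; timeout 10 lia.
timeout 10 lia.
Qed.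

Lemma qbr_le i j : (i <= j)%N -> (qbr p s i <= qbr p s j)%N.
Proof. by rewrite leq_eqVlt => /orP [/eqP -> //| /qbr_lt /ltnW]. Qed.

Lemma qbr_ltE i j : (qbr p s i < qbr p s j)%N = (i < j)%N.
Proof.
apply/idP/idP; last exact: qbr_lt.
by case: (ltnP i j) => // /qbr_le; timeout 10 lia.
Qed.

Lemma qbr_inj : injective (qbr p s).
Proof.
move=> i j h; case: (ltngtP i j) => // /qbr_lt; rewrite h ltnn //.
Qed.

Lemma qbr_geq i : (i <= qbr p s i)%N.
Proof.
elim: i => [|i IH] //; rewrite qbrS; have : (0 < P ^ i)%N by rewrite expn_gt0; timeout 10 lia.
timeout 10 lia.
Qed.
End Qbr.

Section Lin.
Variable F : finFieldType.
Variables (p s : nat).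
Hypothesis P2 : (1 < p ^ s)%N.
Local Notation qbr := (qbr p s).
Local Notation lin := (linearize p s).
Implicit Types g h w : {poly F}.

Definition linN (N : nat) (g : {poly F}) : {poly F} :=
  \sum_(i < N) g`_i *: 'X^(qbr i).

Lemma sum_widen (N M : nat) (G : nat -> {poly F}) :
  (N <= M)%N -> (forall i, (N <= i)%N -> G i = 0) ->
  \sum_(i < N) G i = \sum_(i < M) G i.
Proof.
move=> le hG; rewrite (big_ord_widen _ _ le) big_mkcond /=.
apply: eq_bigr => i _; case: ifP => // /negbT; rewrite -leqNgt => /hG ->//.
Qed.

Lemma lin_N N g : (size g <= N)%N -> lin g = linN N g.
Proof.
move=> le; rewrite /linearize /linN (sum_widen (G := fun i => g`_i *: 'X^(qbr i)) le) //.
by move=> i hi; rewrite nth_default // scale0r.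
Qed.

Lemma coef_linN N g k : (linN N g)`_k = \sum_(i < N) g`_i * (k == qbr i)%:R.
Proof. by rewrite /linN coef_sum; apply: eq_bigr => i _; rewrite coefZ coefXn. Qed.

Lemma linND N g h : linN N (g + h) = linN N g + linN N h.
Proof. by rewrite /linN -big_split; apply: eq_bigr => i _; rewrite coefD scalerDl. Qed.

Lemma linNB N g h : linN N (g - h) = linN N g - linN N h.
Proof. by rewrite /linN -sumrB; apply: eq_bigr => i _; rewrite coefB scalerBl. Qed.

Lemma linN0 N : linN N 0 = 0.
Proof. by rewrite /linN big1 // => i _; rewrite coef0 scale0r. Qed.

Lemma linNZX N c k : (k < N)%N -> linN N (c *: 'X^k) = c *: 'X^(qbr k).
Proof.
move=> lt; rewrite /linN (bigD1 (Ordinal lt)) //= big1 ?addr0.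
  by rewrite coefZ coefXn eqxx mulr1.
move=> i /eqP hi; rewrite coefZ coefXn; case: eqP => [h|]; last by rewrite mulr0 scale0r.
by case: hi; apply: val_inj.
Qed.

Lemma linD g h : lin (g + h) = lin g + lin h.
Proof.
set N := maxn (size g) (size h).
have hg : (size g <= N)%N by rewrite leq_maxl.
have hh : (size h <= N)%N by rewrite leq_maxr.
have hgh : (size (g + h)%R <= N)%N by exact: size_polyD.
by rewrite !(lin_N hg) (lin_N hh) (lin_N hgh) linND.
Qed.

Lemma linB g h : lin (g - h) = lin g - lin h.
Proof.
set N := maxn (size g) (size h).
have hg : (size g <= N)%N by rewrite leq_maxl.
have hh : (size h <= N)%N by rewrite leq_maxr.
have hgh : (size (g - h)%R <= N)%N by have := size_polyD g (- h); rewrite size_polyN.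
by rewrite !(lin_N hg) (lin_N hh) (lin_N hgh) linNB.
Qed.

Lemma lin0 : lin (0 : {poly F}) = 0.
Proof. by rewrite /linearize size_poly0 big_ord0. Qed.

Lemma coef_lin g k : (lin g)`_k = \sum_(i < size g) g`_i * (k == qbr i)%:R.
Proof. by rewrite (lin_N (leqnn _)) coef_linN. Qed.

Lemma coef_lin_qbr g i : (lin g)`_(qbr i) = g`_i.
Proof.
rewrite (lin_N (leq_maxl (size g) i.+1)) coef_linN.
have lt : (i < maxn (size g) i.+1)%N by rewrite leq_maxr.
rewrite (bigD1 (Ordinal lt)) //= eqxx mulr1 big1 ?addr0 //.
move=> j /eqP hj; case: eqP => [/qbr_inj h|]; last by rewrite mulr0.
  by case: hj; apply: val_inj; rewrite /= -h.
Qed.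

Lemma coef_lin_nq g k : (forall i, k != qbr i) -> (lin g)`_k = 0.
Proof.
by move=> h; rewrite coef_lin big1 // => i _; rewrite (negbTE (h i)) mulr0.
Qed.

Lemma size_lin g : (size (lin g) <= qbr (size g))%N.
Proof.
apply/leq_sizeP => k hk; rewrite coef_lin big1 // => i _.
case: eqP; last by rewrite mulr0.
by move=> e; move: hk; rewrite e leqNgt (qbr_ltE P2) ltn_ord.
Qed.

Lemma weight_sum (w : {poly F}) : weight w = (\sum_(i < size w) (w`_i != 0)%R)%N.
Proof.
rewrite /weight -sum1_count (big_nth 0) big_mkord big_mkcond /=.
by apply: eq_bigr => i _; case: ifP.
Qed.

Lemma weightN (w : {poly F}) N : (size w <= N)%N -> weight w = (\sum_(i < N) (w`_i != 0)%R)%N.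
Proof.
move=> le; rewrite weight_sum (big_ord_widen _ (fun i => ((w`_i != 0)%R : nat)) le) big_mkcond /=.
apply: eq_bigr => i _; case: ifP => // /negbT; rewrite -leqNgt => h.
by rewrite nth_default // eqxx.
Qed.

Lemma weight_eq0 (w : {poly F}) : (weight w == 0%N) = (w == 0).
Proof.
apply/idP/idP; last by move/eqP->; rewrite /weight polyseq0.
move=> h; apply/eqP/polyP => k; rewrite coef0.
move: h; rewrite weight_sum sum_nat_eq0 => /forallP.
case: (ltnP k (size w)) => [lt|ge] h; last by rewrite nth_default.
by have := h (Ordinal lt); rewrite eqb0 negbK => /eqP.
Qed.

Lemma weight_lin g : weight (lin g) = weight g.
Proof.
rewrite (weightN (size_lin g)) weight_sum.
transitivity (\sum_(k < qbr (size g)) \sum_(i < size g) (((k : nat) == qbr i) && (g`_i != 0)%R))%N.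
  apply: eq_bigr => k _.
  case: (pickP (fun i : 'I_(size g) => (k : nat) == qbr i)) => [i /eqP hi|hn].
    rewrite (bigD1 i) /= ?hi ?eqxx //= coef_lin_qbr big1 ?addn0 //.
    move=> j /eqP hj; case: eqP => //= /qbr_inj e; case: hj; apply: val_inj.
    by rewrite /= e.
  have nq : forall i, (k : nat) != qbr i.
    move=> i; case: (ltnP i (size g)) => [lt|ge]; first by have := hn (Ordinal lt); rewrite /= => ->.
    apply/eqP => e; have := ltn_ord k; rewrite e (qbr_ltE P2) ltnNge ge.
    done.
  rewrite coef_lin_nq // eqxx big1 // => i _; rewrite (negbTE (nq i)).
  done.
rewrite exchange_big /=; apply: eq_bigr => i _.
rewrite (bigD1 (Ordinal (qbr_lt P2 (ltn_ord i)))) //= eqxx /= big1 ?addn0 //.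
by move=> k /eqP hk; case: eqP => //= e; case: hk; apply: val_inj.
Qed.
End Lin.

Section Skew.
Variable F : finFieldType.
Variables (p s : nat).
Hypothesis P2 : (1 < p ^ s)%N.
Hypothesis Hchar : p \in [pchar F].
Local Notation qbr := (qbr p s).
Local Notation lin := (linearize p s).
Local Notation th := (theta p s).
Local Notation skew := (skew_mul p s).
Implicit Types a b g h w : {poly F}.

Lemma iter_theta i (x : F) : iter i th x = x ^+ ((p ^ s) ^ i)%N.
Proof.
elim: i => [|i IH] /=; first by rewrite expr1.
by rewrite IH /theta -exprM expnSr.
Qed.

Lemma theta0 i : iter i th 0 = 0 :> F.
Proof.
have h : (p ^ s == 0)%N = false by apply/eqP; move: P2; case: (p ^ s)%N.
by rewrite iter_theta expr0n expn_eq0 h.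
Qed.

Definition skewN N M a g : {poly F} :=
  \sum_(i < N) \sum_(j < M) (a`_i * iter i th g`_j) *: 'X^(i + j).

Lemma skew_N N M a g : (size a <= N)%N -> (size g <= M)%N -> skew a g = skewN N M a g.
Proof.
move=> ha hg; rewrite /skew_mul /skewN.
rewrite (sum_widen (G := fun i => \sum_(j < size g) (a`_i * iter i th g`_j) *: 'X^(i + j)) ha); last first.
  by move=> i hi; rewrite big1 // => j _; rewrite nth_default // mul0r scale0r.
apply: eq_bigr => i _.
rewrite (sum_widen (G := fun j => (a`_i * iter i th g`_j) *: 'X^(i + j)) hg) //.
by move=> j hj; rewrite (nth_default 0 hj) theta0 mulr0 scale0r.
Qed.

Lemma skewND N M a b g : skewN N M (a + b) g = skewN N M a g + skewN N M b g.
Proof.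
rewrite /skewN -big_split; apply: eq_bigr => i _.
by rewrite -big_split; apply: eq_bigr => j _; rewrite coefD mulrDl scalerDl.
Qed.

Lemma skewD a b g : skew (a + b) g = skew a g + skew b g.
Proof.
set N := maxn (size a) (size b).
have ha : (size a <= N)%N by rewrite leq_maxl.
have hb : (size b <= N)%N by rewrite leq_maxr.
have hab : (size (a + b)%R <= N)%N by exact: size_polyD.
by rewrite !(skew_N hab (leqnn _)) (skew_N ha (leqnn _)) (skew_N hb (leqnn _)) skewND.
Qed.

Lemma skew0 g : skew 0 g = 0.
Proof. by rewrite /skew_mul size_poly0 big_ord0. Qed.

Lemma size_skew a g : (size (skew a g) <= (size a + size g).-1)%N.
Proof.
apply/leq_sizeP => k hk; rewrite /skew_mul coef_sum big1 // => i _.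
rewrite coef_sum big1 // => j _; rewrite coefZ coefXn.
case: eqP => [e|]; last by rewrite mulr0.
have := ltn_ord i; have := ltn_ord j; lia.
Qed.

Lemma skew_mono e d g :
  skew (e *: 'X^d) g = \sum_(j < size g) (e * iter d th g`_j) *: 'X^(d + j).
Proof.
have hs : (size (e *: 'X^d : {poly F}) <= d.+1)%N.
  by rewrite (leq_trans (size_scale_leq _ _)) // size_polyXn.
rewrite (skew_N hs (leqnn _)) /skewN big_ord_recr /= big1 ?add0r.
  by apply: eq_bigr => j _; rewrite coefZ coefXn eqxx mulr1.
move=> i _; rewrite big1 // => j _; rewrite coefZ coefXn.
by rewrite (ltn_eqF (ltn_ord i)) mulr0 mul0r scale0r.
Qed.

Lemma frob_sum e (I : Type) (r : seq I) (G : I -> {poly F}) :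
  (\sum_(i <- r) G i) ^+ (p ^ e)%N = \sum_(i <- r) (G i) ^+ (p ^ e)%N.
Proof.
have hpr : prime p := pcharf_prime Hchar.
have hp : p \in [pchar {poly F}] by rewrite pchar_poly.
apply: (big_morph (fun x : {poly F} => x ^+ (p ^ e)%N)).
  move=> x y; apply: exprDn_pchar.
  by rewrite (eq_pnat _ (pcharf_eq hp)) pnatX pnat_id.
by rewrite expr0n expn_eq0; case: p hpr.
Qed.

Lemma linN_sum L (I : Type) (r : seq I) (G : I -> {poly F}) :
  linN p s L (\sum_(i <- r) G i) = \sum_(i <- r) linN p s L (G i).
Proof. by apply: big_morph; [move=> x y; exact: linND | exact: linN0]. Qed.

Lemma lin_skew a g : exists b, lin (skew a g) = b * lin g.
Proof.
set N := size a; set M := size g.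
have hL : (size (skew a g) <= N + M)%N.
  by rewrite (leq_trans (size_skew a g)) // leq_pred.
exists (\sum_(i < N) (a`_i *: 'X^(qbr i)) * (lin g) ^+ ((p ^ s) ^ i)%N.-1).
rewrite (lin_N p s hL) (skew_N (leqnn N) (leqnn M)) /skewN linN_sum mulr_suml.
apply: eq_bigr => i _.
rewrite -mulrA -exprSr prednK; last by rewrite expn_gt0 (ltnW P2).
rewrite linN_sum (lin_N p s (leqnn M)) [linN p s M g]/linN -expnM frob_sum mulr_sumr.
apply: eq_bigr => j _.
rewrite (linNZX p s); last by have := ltn_ord i; have := ltn_ord j; lia.
rewrite exprZn -exprM -scalerAl -scalerAr scalerA -exprD (qbrD P2) expnM mulnC.
by rewrite iter_theta.
Qed.
End Skew.

Section Div.
Variable F : finFieldType.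
Variables (p s : nat).
Hypothesis P2 : (1 < p ^ s)%N.
Hypothesis Hchar : p \in [pchar F].
Local Notation qbr := (qbr p s).
Local Notation lin := (linearize p s).
Local Notation th := (theta p s).
Local Notation skew := (skew_mul p s).
Implicit Types a b g h w : {poly F}.

Lemma lin_eq0 w : (lin w == 0) = (w == 0).
Proof. by rewrite -!weight_eq0 (weight_lin P2). Qed.

Lemma skew_divides f w : f != 0 -> (exists b, lin w = b * lin f) -> exists a, w = skew a f.
Proof.
move=> f0; move: {2}(size w) (leqnn (size w)) => n.
elim: n w => [|n IH] w hw [b hb].
  by exists 0; move: hw; rewrite size_poly_leq0 skew0 => /eqP.
set k := (size f).-1.
have sf : size f = k.+1 by rewrite /k prednK // size_poly_gt0.
have hlf : (qbr k < size (lin f))%N.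
  rewrite ltnNge; apply/negP => /leq_sizeP h; have := h _ (leqnn _).
  rewrite (coef_lin_qbr P2) /k -lead_coefE => /eqP; rewrite lead_coef_eq0.
  by rewrite (negbTE f0).
case: (ltnP (size w) (size f)) => [lt|ge].
  exists 0; rewrite skew0; apply/eqP; rewrite -lin_eq0; apply/negPn/negP => nz.
  have := dvdp_leq nz (_ : lin f %| lin w).
  rewrite hb dvdp_mull ?dvdpp // => /(_ isT); rewrite -hb => h.
  have := leq_trans h (size_lin P2 w).
  have := qbr_le P2 (_ : (size w <= k)%N); rewrite -ltnS -sf => /(_ lt) h2 h3.
  by have := leq_ltn_trans (leq_trans h3 h2) hlf; rewrite ltnn.
set m := (size w).-1.
have sw : size w = m.+1 by rewrite /m prednK // (leq_trans _ ge) // sf.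
set d := (m - k)%N.
set c := lead_coef w.
set l := lead_coef f.
have l0 : l != 0 by rewrite lead_coef_eq0.
have tl0 : iter d th l != 0 by rewrite iter_theta expf_neq0.
set e := c / iter d th l.
set w' := w - skew (e *: 'X^d) f.
have hsk : (size (skew (e *: 'X^d) f) <= m.+1)%N.
  apply: (leq_trans (size_skew P2 Hchar _ _)).
  have := size_scale_leq e ('X^d : {poly F}); rewrite size_polyXn sf.
  rewrite sf in ge; rewrite sw in ge; lia.
have hw' : (size w' <= n)%N.
  apply: leq_trans (_ : (size w' <= m)%N) _; last by rewrite -ltnS -sw.
  apply/leq_sizeP => j hj; rewrite coefB.
  rewrite leq_eqVlt in hj; case/orP: hj => [/eqP <-|hj]; last first.
    by rewrite !nth_default ?subrr // ?sw // (leq_trans hsk).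
  rewrite (skew_mono P2) coef_sum.
  have kf : (k < size f)%N by rewrite sf.
  rewrite (bigD1 (Ordinal kf)) //= big1 ?addr0.
    rewrite coefZ coefXn /d subnK; last by rewrite sf sw in ge; lia.
    by rewrite eqxx mulr1 /e divfK // -/l /c lead_coefE -/m subrr.
  move=> j' /eqP hj; rewrite coefZ coefXn.
  case: eqP => [h|]; last by rewrite mulr0.
  case: hj; apply: val_inj => /=; rewrite sf sw in ge; move: h; rewrite /d; lia.
have [b1 hb1] := lin_skew P2 Hchar (e *: 'X^d) f.
have hd : lin w' = (b - b1) * lin f by rewrite /w' linB hb hb1 mulrBl.
have [a' ha'] := IH w' hw' (ex_intro _ _ hd).
by exists (a' + e *: 'X^d); rewrite (skewD P2) -ha' /w' subrK.
Qed.
End Div.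

Unset Implicit Arguments.
Theorem mainTheorem9 (F : finFieldType) (p r s n : nat)
  (Hp : prime p) (Hchar : p \in [pchar F]) (Hcard : #|F| = (p ^ r)%N)
  (Hs1 : (1 <= s)%N) (Hs2 : (s <= r - 1)%N)
  (f Fm : {poly F}) (HFm : Fm \is monic) (HFdeg : size Fm = n.+1)
  (Hdiv : exists h : {poly F}, Fm = skew_mul p s h f)
  (dC dCs : nat)
  (HdC : is_min_dist (skew_code p s n f) dC)
  (HdCs : is_min_dist (lin_code p s n f) dCs) :
  (dCs <= dC)%N /\
  (dCs = dC <->
     exists v, lin_code p s n f v /\ v != 0 /\ weight v = dCs /\ in_qbr_span p s v).
Proof.
have P2 : (1 < p ^ s)%N.
  clear -Hs1 Hp; case: s Hs1 => // s' _; rewrite expnS (leq_trans (prime_gt1 Hp)) //.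
  by rewrite leq_pmulr // expn_gt0 prime_gt0.
have f0 : f != 0.
  apply/negP => /eqP f0; case: Hdiv => h; rewrite f0 => hF.
  have : Fm = 0.
    by rewrite hF /skew_mul; apply: big1 => i _; rewrite size_poly0 big_ord0.
  by move/eqP; rewrite (negbTE (monic_neq0 HFm)).
case: HdC => [[w [[hsw [a ha]] [w0 ww]]] hmin].
case: HdCs => [[v0 [hv0 [vv0 wv0]]] hmins].
have linC : forall w, skew_code p s n f w -> lin_code p s n f (linearize p s w).
  move=> x [hsx [ax hax]]; split.
    exact: leq_trans (size_lin P2 x) (qbr_le P2 hsx).
  by rewrite hax; apply: lin_skew.
have lw0 : linearize p s w != 0 by rewrite (lin_eq0 P2).
have le1 : (dCs <= dC)%N.
  by rewrite -ww -(weight_lin P2); apply: hmins => //; apply: linC; split => //; exists a.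
split => //; split.
  move=> e; exists (linearize p s w); split; first by apply: linC; split => //; exists a.
  split => //; split; first by rewrite (weight_lin P2) ww e.
  move=> k nz.
  case: (pickP (fun i : 'I_k.+1 => k == qbr p s i)) => [i /eqP hi|hn].
    by exists i.
  move: nz; rewrite coef_lin_nq ?eqxx //.
  move=> i; case: (ltnP i k.+1) => [lt|ge]; first by have := hn (Ordinal lt); rewrite /= => ->.
  apply/eqP => hk; have := qbr_geq P2 i; rewrite -hk; lia.
case=> v [[hsv [b hb]] [v1 [wv hsp]]].
set N := size v.
set x := \poly_(i < N) v`_(qbr p s i).
have hx : linearize p s x = v.
  apply/polyP => k; rewrite (lin_N p s (size_poly _ _)) coef_linN.
  case: (pickP (fun i : 'I_N => k == qbr p s i)) => [i /eqP hi|hn].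
    rewrite (bigD1 i) //= big1 ?addr0.
      by rewrite coef_poly ltn_ord -hi eqxx mulr1.
    move=> j /eqP hj; case: eqP; last by rewrite mulr0.
    by rewrite hi => /(qbr_inj P2) e; case: hj; apply: val_inj.
  rewrite big1; last by move=> i _; rewrite hn mulr0.
  apply/esym/eqP/negPn/negP => nz; have [j hj] := hsp k nz.
  have kN : (k < N)%N.
    by rewrite ltnNge; apply/negP => /leq_sizeP /(_ k (leqnn k)) /eqP; rewrite (negbTE nz).
  have jN : (j < N)%N by apply: leq_ltn_trans kN; rewrite hj qbr_geq.
  by have := hn (Ordinal jN); rewrite /= hj eqxx.
have x0 : x != 0 by rewrite -(lin_eq0 P2) hx.
have hxC : skew_code p s n f x.
  split.
    apply/leq_sizeP => j hj; rewrite coef_poly; case: ifP => // _.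
    by rewrite nth_default // (leq_trans hsv) // qbr_le.
  apply: (skew_divides P2 Hchar f0); exists b; by rewrite hx.
have := hmin x hxC x0; rewrite -(weight_lin P2) hx wv => le2.
by apply/eqP; rewrite eqn_leq le1 le2.
Qed.
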